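(* Let $n,m\ge 2$ be integers and $P_n,P_m$ paths on $n$ and $m$ vertices. Then $AT(P_n+_Q P_m)=2$ if $n=m=2$, and $AT(P_n+_Q P_m)=3$ otherwise.
   Context: For an orientation $D$, a subdigraph is Eulerian if every vertex has equal in- and outdegree in it; $D$ is an AT-orientation if the numbers of Eulerian subgraphs with an even and with an odd number of arcs differ; $AT(G)$ is the smallest $k$ such that $G$ has an AT-orientation of maximum outdegree at most $k-1$. $Q(G)$ has vertex set $V(G)\cup E(G)$: it is $S(G)$ (each edge $e=xy$ replaced by the path $x\,e\,y$) plus edges $ee'$ whenever edges $e,e'$ are adjacent in $G$. $G+_Q H$ has vertex set $(V(G)\cup E(G))\times V(H)$, with $(u_1,u_2)\sim(v_1,v_2)$ iff [$u_1=v_1\in V(G)$ and $u_2v_2\in E(H)$] or [$u_2=v_2$ and $u_1v_1\in E(Q(G))$]. *)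

(* Defs.v *)
From mathcomp Require Import all_boot.
Set Implicit Arguments. Unset Strict Implicit. Unset Printing Implicit Defensive.

Section Defs.

Definition is_orientation (V : finType) (adj : rel V) (D : {set V * V}) : Prop :=
  (forall x y, (x, y) \in D -> adj x y) /\
  (forall x y, adj x y -> ((x, y) \in D) != ((y, x) \in D)).

Definition eulerian_sub (V : finType) (D A : {set V * V}) : bool :=
  (A \subset D) &&
  [forall v, #|[set a in A | a.1 == v]| == #|[set a in A | a.2 == v]|].

Definition AT_orientation (V : finType) (D : {set V * V}) : bool :=
  #|[pred A : {set V * V} | eulerian_sub D A & ~~ odd #|A| ]|
  != #|[pred A : {set V * V} | eulerian_sub D A & odd #|A| ]|.

Definition outdeg (V : finType) (D : {set V * V}) (x : V) : nat :=
  #|[set y | (x, y) \in D]|.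

Definition has_AT_orientation (V : finType) (adj : rel V) (k : nat) : Prop :=
  exists D : {set V * V},
    is_orientation adj D /\ AT_orientation D /\ forall x, outdeg D x < k.

Definition AT_number (V : finType) (adj : rel V) (k : nat) : Prop :=
  has_AT_orientation adj k /\ forall j, j < k -> ~ has_AT_orientation adj j.

Definition is_edge (T : finType) (e : rel T) (A : {set T}) : bool :=
  [exists x, exists y, e x y && (A == [set x; y])].

Definition edgeT (T : finType) (e : rel T) := {A : {set T} | is_edge e A}.

(** Q(G): vertices V(G) + E(G); S(G) edges x--e for x in e, plus e--e'
    for distinct adjacent edges. *)
Definition Qadj (T : finType) (e : rel T) : rel (T + edgeT e) :=
  fun u v =>
    match u, v with
    | inl x, inr f => x \in val f
    | inr f, inl x => x \in val f
    | inr f, inr f' => (f != f') && (val f :&: val f' != set0)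
    | inl _, inl _ => false
    end.

Definition Qprod (T : finType) (e : rel T) (T' : finType) (e' : rel T')
  : rel ((T + edgeT e) * T') :=
  fun u v =>
    (match u.1, v.1 with
     | inl x, inl y => (x == y) && e' u.2 v.2
     | _, _ => false
     end)
    || ((u.2 == v.2) && Qadj u.1 v.1).

Definition Ppath (n : nat) : rel 'I_n :=
  fun i j => (i.+1 == j :> nat) || (j.+1 == i :> nat).

End Defs.

Arguments Ppath n : clear implicits.
Arguments Qprod {T} e {T'} e'.
Arguments Qadj {T} e.

(* Main.v *)
Require Import Defs.
From mathcomp Require Import all_boot zify.
Set Implicit Arguments. Unset Strict Implicit. Unset Printing Implicit Defensive.

Lemma eulerian_rank (V : finType) (r : V -> nat) (D A : {set V * V}) :
  (forall a, a \in D -> r a.1 < r a.2) -> eulerian_sub D A -> A = set0.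
Proof.
move=> HD /andP[AD /forallP Heq].
apply/eqP; apply/negPn/negP => /set0Pn [a0 a0A].
case: (arg_minnP (fun a => r a.1) a0A) => a aA amin.
have H : 0 < #|[set b in A | b.1 == a.1]|.
  by apply/card_gt0P; exists a; rewrite inE eqxx andbT.
move/eqP: (Heq a.1) => E; rewrite E in H.
case/card_gt0P: H => b; rewrite inE => /andP[bA /eqP b2].
have h1 := amin b bA. have h2 := HD b (subsetP AD b bA). rewrite b2 in h2. lia.
Qed.

Lemma acyc_AT (V : finType) (r : V -> nat) (D : {set V * V}) :
  (forall a, a \in D -> r a.1 < r a.2) -> AT_orientation D.
Proof.
move=> HD; rewrite /AT_orientation.
have E : forall A, eulerian_sub D A = (A == set0).
  move=> A; apply/idP/eqP => [/(eulerian_rank HD) //| ->].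
  rewrite /eulerian_sub sub0set; apply/forallP => v.
  apply/eqP; rewrite !eq_card0 // => a; rewrite !inE // ?andbC.
rewrite (@eq_card _ _ (pred1 set0)); last first.
  by move=> A; rewrite !inE E; case: eqP => // ->; rewrite cards0.
rewrite card1 eq_card0 // => A; rewrite !inE E; case: eqP => // ->; rewrite cards0.
by [].
Qed.

Lemma rank_orient (V: finType) (adj : rel V) (r : V -> nat) :
  (forall x y, adj x y -> adj y x) -> (forall x y, adj x y -> r x != r y) ->
  is_orientation adj [set a | adj a.1 a.2 && (r a.1 < r a.2)].
Proof.
move=> Hs Hr; split => x y; rewrite ?inE /=; first by case/andP.
move=> Hxy; rewrite Hxy (Hs _ _ Hxy) /=.
move: (Hr _ _ Hxy); case: ltngtP => //.
Qed.

Lemma card_pred_sum (V : finType) (P : pred V) : #|[set y | P y]| = \sum_y P y.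
Proof.
rewrite -sum1_card big_mkcond /=; apply eq_bigr => y _; rewrite inE; by case: (P y).
Qed.

Lemma no_AT2 (V : finType) (adj : rel V) (D : {set V*V}) :
  is_orientation adj D -> (forall x, outdeg D x < 2) ->
  (forall x, 2 <= #|[set y | adj x y]|) -> (exists x, 3 <= #|[set y | adj x y]|) -> False.
Proof.
move=> [_ HO] Hout H2 [x0 H3].
pose out x := #|[set y | (x,y) \in D]|.
pose inn x := #|[set y | (y,x) \in D]|.
have Hsum : \sum_x inn x = \sum_x out x.
  rewrite /inn /out; under eq_bigr do rewrite card_pred_sum.
  rewrite exchange_big /=; apply eq_bigr => y _; by rewrite card_pred_sum.
have Hdeg : forall x, #|[set y | adj x y]| <= out x + inn x.
  move=> x; rewrite /out /inn -cardsUI; apply: leq_trans (leq_addr _ _).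
  apply: subset_leq_card; apply/subsetP => y; rewrite !inE => /HO.
  by case: ((x,y) \in D); case: ((y,x) \in D).
have Hle : \sum_x #|[set y | adj x y]| <= \sum_(x : V) 2.
  have Hle1 : \sum_x #|[set y | adj x y]| <= \sum_x (out x + inn x).
    by apply: leq_sum => x _; exact: Hdeg.
  apply: (leq_trans Hle1).
  rewrite big_split /= Hsum -big_split /=; apply: leq_sum => x _.
  by have := Hout x; rewrite /outdeg -/(out x) => h; lia.
have Hge : \sum_(x : V) 2 < \sum_x #|[set y | adj x y]|.
  rewrite (bigD1 x0) //= [X in _ < X](bigD1 x0) //=.
  rewrite -addSn leq_add //; by apply: leq_sum.
lia.
Qed.

Lemma two_le_card (V : finType) (A : {set V}) y1 y2 :
  y1 != y2 -> y1 \in A -> y2 \in A -> 2 <= #|A|.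
Proof.
move=> ne h1 h2; rewrite -[2]/((true : nat).+1) -ne -cards2.
apply: subset_leq_card; apply/subsetP => y; rewrite !inE => /orP[] /eqP ->//.
Qed.

Lemma three_le_card (V : finType) (A : {set V}) y1 y2 y3 :
  y1 != y2 -> y1 != y3 -> y2 != y3 -> y1 \in A -> y2 \in A -> y3 \in A -> 3 <= #|A|.
Proof.
move=> n12 n13 n23 h1 h2 h3.
have : #|[set y1; y2; y3]| = 3.
  rewrite -setUA cardsU1 cards2 n23 !inE negb_or n12 n13 //.
move=> <-; apply: subset_leq_card; apply/subsetP => y; rewrite !inE => /orP[/orP[]|] /eqP ->//.
Qed.

Lemma card_sel (T : finType) (A : {set T}) c : #|[set a in A | a == c]| = (c \in A).
Proof.
case: (boolP (c \in A)) => H.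
  suff -> : [set a in A | a == c] = [set c] by rewrite cards1.
  apply/setP => a; rewrite !inE.
  by case: (a =P c) => [->|]; rewrite ?H ?andbF.
suff -> : [set a in A | a == c] = set0 by rewrite cards0.
 apply/setP => a; rewrite !inE.
by case: (a =P c) => [->|]; rewrite ?(negbTE H) ?andbF.
Qed.

Lemma cycle_AT (V : finType) (s : V -> V) (x0 : V) :
  injective s -> (forall x, exists k, x = iter k s x0) -> ~~ odd #|V| ->
  AT_orientation [set a | a.2 == s a.1].
Proof.
move=> sinj scyc hodd.
set D := [set a | a.2 == s a.1].
have Hout : forall (A : {set V * V}) y, A \subset D -> [set a in A | a.1 == y] = [set a in A | a == (y, s y)].
  move=> A y AD; apply/setP => [[a b]]; rewrite !inE /=.
  case: (boolP ((a,b) \in A)) => //= H.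
  move: (subsetP AD _ H); rewrite inE /= => /eqP ->.
  by rewrite xpair_eqE; case: eqP => // ->; rewrite eqxx.
have Hin : forall (A : {set V * V}) x, A \subset D -> [set a in A | a.2 == s x] = [set a in A | a == (x, s x)].
  move=> A x AD; apply/setP => [[a b]]; rewrite !inE /=.
  case: (boolP ((a,b) \in A)) => //= H.
  move: (subsetP AD _ H); rewrite inE /= => /eqP ->.
  rewrite xpair_eqE (inj_eq sinj); by case: eqP => // ->; rewrite eqxx.
have [sinv sK Ks] := injF_bij sinj.
have Eul : forall A : {set V * V}, eulerian_sub D A -> A = set0 \/ A = D.
  move=> A /andP[AD /forallP HE].
  have step : forall x, ((x, s x) \in A) = ((s x, s (s x)) \in A).
    move=> x; move/eqP: (HE (s x)); rewrite Hout // Hin // !card_sel.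
    by case: ((x, s x) \in A); case: ((s x, s (s x)) \in A).
  have all : forall k, ((iter k s x0, s (iter k s x0)) \in A) = ((x0, s x0) \in A).
    by elim=> [//|k IH]; rewrite iterS -step IH.
  have memA : forall a, a \in D -> (a \in A) = ((x0, s x0) \in A).
    move=> [a b]; rewrite inE /= => /eqP ->.
    by case: (scyc a) => k ->; rewrite all.
  case: (boolP ((x0, s x0) \in A)) => H; [right | left]; apply/setP => a.
    case: (boolP (a \in D)) => aD; first by rewrite memA.
    by apply/negbTE; apply: contra aD; apply: (subsetP AD).
  rewrite inE; case: (boolP (a \in D)) => aD; first by rewrite memA // (negbTE H).
  by apply/negbTE; apply: contra aD; apply: (subsetP AD).
have EulD : eulerian_sub D D.
  rewrite /eulerian_sub subxx; apply/forallP => y.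
  have -> : y = s (sinv y) by rewrite Ks.
  rewrite Hout // Hin // !card_sel !inE /= !eqxx //.
have Eul0 : eulerian_sub D set0.
  rewrite /eulerian_sub sub0set; apply/forallP => v.
  by apply/eqP; rewrite !eq_card0 // => a; rewrite !inE.
have cardD : #|D| = #|V|.
  have -> : D = [set (x, s x) | x in V].
    apply/setP => [[x y]]; rewrite inE /=; apply/eqP/imsetP => [-> | [z _ [-> ->]]] //.
    by exists x.
  by rewrite card_imset // => a b [].
have D0 : D != set0.
  by apply/set0Pn; exists (x0, s x0); rewrite inE /=.
have E : forall A : {set V * V}, eulerian_sub D A = (A == set0) || (A == D).
  move=> A; apply/idP/orP => [/Eul [] -> | [] /eqP ->] //; by [left | right].
have Ev : #|[pred A : {set V*V} | eulerian_sub D A & ~~ odd #|A|]| = 2.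
  rewrite (@eq_card _ _ (pred2 set0 D)); last first.
    move=> A; rewrite !inE E; case: eqP => [->|_]; first by rewrite cards0.
    by case: eqP => // ->; rewrite cardD hodd.
  by rewrite card2 eq_sym D0.
have Od : #|[pred A : {set V*V} | eulerian_sub D A & odd #|A|]| = 0.
  apply: eq_card0 => A; rewrite !inE E.
  case: eqP => [->|_]; first by rewrite cards0.
  by case: eqP => // ->; rewrite cardD (negbTE hodd).
by rewrite /AT_orientation Ev Od.
Qed.

Lemma edge_char n (f : edgeT (Ppath n)) : exists (x y : 'I_n), x.+1 = y /\ val f = [set x; y].
Proof.
case: f => A HA /=; move: (HA) => /existsP[x /existsP[y /andP[P /eqP ->]]].
case/orP: P => /eqP H; [exists x, y | exists y, x; rewrite setUC]; split => //.
Qed.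

Lemma mk_edge_is n (x y : 'I_n) : x.+1 == y -> is_edge (Ppath n) [set x; y].
Proof. by move=> H; apply/existsP; exists x; apply/existsP; exists y; rewrite /Ppath H eqxx. Qed.

Definition mk_edge n (x y : 'I_n) (H : x.+1 == y) : edgeT (Ppath n) :=
  exist _ [set x; y] (mk_edge_is H).

Definition stage n (u : 'I_n + edgeT (Ppath n)) : nat :=
  match u with inl i => (i:nat) * 2 | inr f => \sum_(z in val f) (z : nat) end.

Lemma stage_edge n (f : edgeT (Ppath n)) (x y : 'I_n) :
  x.+1 = y -> val f = [set x; y] -> stage (inr f) = (x * 2).+1.
Proof.
move=> H1 H2; rewrite /= H2 big_setU1 /= ?big_set1; first lia.
apply/negP; rewrite inE => /eqP e; move: H1; rewrite e; lia.
Qed.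

Lemma stage_inj n : injective (@stage n).
Proof.
have edg : forall f : edgeT (Ppath n), exists x : 'I_n, stage (inr f) = (x * 2).+1 /\
     forall g : edgeT (Ppath n), stage (inr g) = (x * 2).+1 -> g = f.
  move=> f; case: (edge_char f) => x [y [H1 H2]]; exists x; split; first exact: stage_edge H2.
  move=> g; case: (edge_char g) => x' [y' [H1' H2']]; rewrite (stage_edge H1' H2') => e.
  have ex : x' = x by apply: ord_inj; lia.
  have ey : y' = y by apply: ord_inj; lia.
  by apply: val_inj; rewrite H2 H2' ex ey.
case=> [i|f] [j|g].
- by rewrite /= => e; congr inl; apply: ord_inj; lia.
- case: (edg g) => x [hx _]; rewrite hx /=; lia.
- case: (edg f) => x [hx _]; rewrite hx /=; lia.
- case: (edg f) => x [hx hf] e; congr inr; symmetry; apply: hf; by rewrite -e.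
Qed.

Definition rank n m (u : ('I_n + edgeT (Ppath n)) * 'I_m) : nat := stage u.1 * m + u.2.

Lemma rank_inj n m : injective (@rank n m).
Proof.
move=> [a v] [b w]; rewrite /rank /= => e.
have m0 : 0 < m by apply: leq_ltn_trans (ltn_ord v).
have ev : (v : nat) = w.
  by move: (congr1 (modn^~ m) e); rewrite !modnMDl !modn_small.
have es : stage a = stage b.
  by move: (congr1 (divn^~ m) e); rewrite !divnMDl // !divn_small // !addn0.
by rewrite (stage_inj es) (val_inj ev).
Qed.

Lemma Qprod_sym n m (x y : ('I_n + edgeT (Ppath n)) * 'I_m) :
  Qprod (Ppath n) (Ppath m) x y = Qprod (Ppath n) (Ppath m) y x.
Proof.
case: x y => [a v] [b w]; rewrite /Qprod /= [w == v]eq_sym /Ppath.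
congr orb; first by case: a b => [i|f] [j|g] //=; rewrite eq_sym orbC.
congr andb; case: a b => [i|f] [j|g] //=; by rewrite eq_sym setIC.
Qed.

Lemma Qprod_irr n m (x : ('I_n + edgeT (Ppath n)) * 'I_m) : Qprod (Ppath n) (Ppath m) x x = false.
Proof.
case: x => [[i|f] v]; rewrite /Qprod /Ppath /= ?eqxx //=; apply/negbTE; lia.
Qed.

Lemma lt_rank s1 s2 v m : 0 < m -> (s1 * m + v < s2 * m + v) = (s1 < s2).
Proof. by move=> m0; rewrite ltn_add2r ltn_pmul2r. Qed.

Lemma later_nb n m (x y : ('I_n + edgeT (Ppath n)) * 'I_m) :
  Qprod (Ppath n) (Ppath m) x y -> rank x < rank y ->
  match x.1 with
  | inl i => ((y.2 == x.2) && (stage y.1 == (i:nat) * 2 + 1)) || ((y.1 == x.1) && (y.2 == x.2 + 1 :> nat))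
  | inr f => (y.2 == x.2) && ((stage y.1 == stage x.1 + 1) || (stage y.1 == stage x.1 + 2))
  end.
Proof.
have m0 : 0 < m by apply: leq_ltn_trans (ltn_ord x.2).
case: x y => [a v] [b w]; rewrite /Qprod /rank /=.
case: a => [i|f]; case: b => [j|g].
- rewrite /= andbF orbF => /andP[/eqP <- Hp]; rewrite ltn_add2l => Hvw.
  apply/orP; right; rewrite eqxx /=; move: Hp; rewrite /Ppath; lia.
- case: (edge_char g) => x [y [H1 H2]]; rewrite (stage_edge H1 H2) /=.
  move=> /andP[/eqP <- Hi]; rewrite lt_rank // eqxx /=.
  move: Hi; rewrite H2 !inE -!val_eqE /=; lia.
- case: (edge_char f) => x [y [H1 H2]]; rewrite (stage_edge H1 H2) /=.
  move=> /andP[/eqP <- Hi]; rewrite lt_rank // eqxx /=.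
  move: Hi; rewrite H2 !inE -!val_eqE /=; lia.
- case: (edge_char f) => x [y [H1 H2]]; rewrite (stage_edge H1 H2).
  case: (edge_char g) => x' [y' [H1' H2']]; rewrite (stage_edge H1' H2') /=.
  move=> /andP[/eqP <- /andP[_ /set0Pn [z]]]; rewrite lt_rank // eqxx /=.
  rewrite H2 H2' !inE -!val_eqE /=; lia.
Qed.

Lemma le1_stage n m (v : 'I_m) s :
  #|[set y : ('I_n + edgeT (Ppath n)) * 'I_m | (y.2 == v) && (stage y.1 == s)]| <= 1.
Proof.
apply/card_le1_eqP => [[a b] [c d]]; rewrite !inE /= => /andP[/eqP -> /eqP h1] /andP[/eqP -> /eqP h2].
by rewrite (@stage_inj n a c) // h1 h2.
Qed.

Lemma le1_col n m a (v : nat) :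
  #|[set y : ('I_n + edgeT (Ppath n)) * 'I_m | (y.1 == a) && (y.2 == v :> nat)]| <= 1.
Proof.
apply/card_le1_eqP => [[a1 b] [c d]]; rewrite !inE /= => /andP[/eqP -> /eqP h1] /andP[/eqP -> /eqP h2].
by congr pair; apply: ord_inj; rewrite h1 h2.
Qed.

Lemma outdeg_rank n m (x : ('I_n + edgeT (Ppath n)) * 'I_m) :
  outdeg [set a | Qprod (Ppath n) (Ppath m) a.1 a.2 && (rank a.1 < rank a.2)] x < 3.
Proof.
rewrite /outdeg.
have H := @later_nb n m x.
case: x H => [[i|f] v] /= H.
- apply: (@leq_ltn_trans (1 + 1)) => //.
  apply: leq_trans (leq_add (le1_stage n v ((i:nat) * 2 + 1)) (le1_col m (inl i) (v + 1))).
  rewrite -cardsUI; apply: leq_trans (leq_addr _ _); apply: subset_leq_card.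
  apply/subsetP => y; rewrite !inE => /andP[h1 h2]; exact: H h1 h2.
- apply: (@leq_ltn_trans (1 + 1)) => //.
  apply: leq_trans (leq_add (le1_stage n v (stage (inr f) + 1)) (le1_stage n v (stage (inr f) + 2))).
  rewrite -cardsUI; apply: leq_trans (leq_addr _ _); apply: subset_leq_card.
  apply/subsetP => y; rewrite !inE => /andP[h1 h2]; rewrite -andb_orr; exact: H h1 h2.
Qed.

Lemma nbP n (i : 'I_n) : 1 < n -> exists j : 'I_n, i.+1 == j \/ j.+1 == i.
Proof.
move=> hn; case: (ltnP i.+1 n) => h; first by exists (Ordinal h); left.
have h' : i.-1 < n by apply: leq_ltn_trans (leq_pred _) (ltn_ord i).
exists (Ordinal h'); right => /=; have := ltn_ord i; lia.
Qed.

Lemma nbE n (i : 'I_n) : 1 < n -> exists f : edgeT (Ppath n), i \in val f.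
Proof.
move=> hn; case: (nbP i hn) => j [h|h].
  by exists (mk_edge h); rewrite /= !inE eqxx.
by exists (mk_edge h); rewrite /= !inE eqxx orbT.
Qed.

Lemma deg2 n m (x : ('I_n + edgeT (Ppath n)) * 'I_m) : 1 < n -> 1 < m ->
  2 <= #|[set y | Qprod (Ppath n) (Ppath m) x y]|.
Proof.
move=> hn hm; case: x => [[i|f] v].
- case: (nbE i hn) => f hf; case: (nbP v hm) => w hw.
  apply: (@two_le_card _ _ (inr f, v) (inl i, w)) => //; rewrite !inE /Qprod /= ?eqxx ?hf //.
  by rewrite /Ppath; case: hw => ->; rewrite ?orbT.
- case: (edge_char f) => x [y [H1 H2]].
  apply: (@two_le_card _ _ (inl x, v) (inl y, v)); rewrite ?inE /Qprod /= ?eqxx ?H2 ?inE ?eqxx ?orbT //.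
  apply/negP => /eqP [] /(congr1 val) /=; lia.
Qed.

Lemma deg3 n m : 1 < n -> 1 < m -> ~~ ((n == 2) && (m == 2)) ->
  exists x : ('I_n + edgeT (Ppath n)) * 'I_m, 3 <= #|[set y | Qprod (Ppath n) (Ppath m) x y]|.
Proof.
move=> hn hm h2.
have n0 : 0 < n by apply: ltnW.
have m0 : 0 < m by apply: ltnW.
pose i0 := Ordinal n0; pose i1 := Ordinal hn.
pose v0 := Ordinal m0; pose v1 := Ordinal hm.
have e01 : i0.+1 == i1 by [].
case: (ltnP 2 n) => h3.
- pose i2 := Ordinal h3.
  have e12 : i1.+1 == i2 by [].
  exists (inr (mk_edge e01), v0).
  apply: (@three_le_card _ _ (inl i0, v0) (inl i1, v0) (inr (mk_edge e12), v0)) => //;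
    rewrite ?inE /Qprod /= ?eqxx ?inE //=.
  apply/andP; split.
    by apply/negP => /eqP /(congr1 (fun f : edgeT (Ppath n) => i0 \in val f)); rewrite /= !inE.
  by apply/set0Pn; exists i1; rewrite !inE eqxx orbT.
- have hm3 : 2 < m by move: h2 h3 (hn) (hm); lia.
  pose v2 := Ordinal hm3.
  exists (inl i0, v1).
  apply: (@three_le_card _ _ (inl i0, v0) (inl i0, v2) (inr (mk_edge e01), v1)) => //;
    rewrite ?inE /Qprod /Ppath /= ?eqxx ?inE //=.
Qed.

Definition e0 : edgeT (Ppath 2) := @mk_edge 2 ord0 ord_max (erefl true).

Lemma e0_uniq (f : edgeT (Ppath 2)) : f = e0.
Proof.
case: (edge_char f) => x [y [H1 H2]]; apply: val_inj; rewrite H2 /=.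
have -> : x = ord0 by apply: ord_inj; have := ltn_ord y; rewrite -H1 /=; lia.
have -> : y = ord_max by apply: ord_inj; have := ltn_ord y; rewrite -H1 /=; lia.
by [].
Qed.

Definition V22 := (('I_2 + edgeT (Ppath 2)) * 'I_2)%type.

Definition s22 (x : V22) : V22 :=
  let: (a, v) := x in
  match a with
  | inl i => if (i:nat) == 0 then (if (v:nat) == 0 then (inr e0, v) else (inl i, ord0))
             else (if (v:nat) == 0 then (inl i, ord_max) else (inr e0, v))
  | inr _ => if (v:nat) == 0 then (inl ord_max, v) else (inl ord0, v)
  end.

Lemma ord2 (i : 'I_2) : i = ord0 \/ i = ord_max.
Proof. case: i => [[|[|//]]] h; [left|right]; exact: ord_inj. Qed.

Lemma caseV (P : V22 -> Prop) :
  P (inl ord0, ord0) -> P (inl ord0, ord_max) -> P (inl ord_max, ord0) ->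
  P (inl ord_max, ord_max) -> P (inr e0, ord0) -> P (inr e0, ord_max) -> forall x, P x.
Proof.
move=> h1 h2 h3 h4 h5 h6 [[i|f] v].
- by case: (ord2 i) => ->; case: (ord2 v) => ->.
- by rewrite (e0_uniq f); case: (ord2 v) => ->.
Qed.

Lemma s22_6 x : iter 6 s22 x = x.
Proof. by elim/caseV: x. Qed.

Lemma s22_inj : injective s22.
Proof.
apply: (@can_inj _ _ _ (iter 5 s22)) => x; by rewrite -iterSr s22_6.
Qed.

Lemma s22_cyc x : exists k, x = iter k s22 (inl ord0, ord0).
Proof.
elim/caseV: x; [exists 0 | exists 5 | exists 2 | exists 3 | exists 1 | exists 4]; by [].
Qed.

Definition code (x : V22) : nat :=
  (match x.1 with inl i => (i:nat) | inr _ => 2 end) * 2 + x.2.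

Lemma code_inj : injective code.
Proof.
move=> [a v] [b w]; rewrite /code /=.
have hv := ltn_ord v; have hw := ltn_ord w.
case: a => [i|f]; case: b => [j|g] => e.
- have hi := ltn_ord i; have hj := ltn_ord j.
  have ei : i = j by apply: ord_inj; lia.
  have ev : v = w by apply: ord_inj; lia.
  by rewrite ei ev.
- have hi := ltn_ord i; lia.
- have hj := ltn_ord j; lia.
- have ev : v = w by apply: ord_inj; lia.
  by rewrite ev (e0_uniq f) (e0_uniq g).
Qed.

Definition D22 : {set V22 * V22} := [set a | a.2 == s22 a.1].

Lemma adj_s22 x : Qprod (Ppath 2) (Ppath 2) x (s22 x).
Proof. elim/caseV: x; by rewrite /Qprod /= ?inE. Qed.

Lemma orient22 : is_orientation (Qprod (Ppath 2) (Ppath 2)) D22.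
Proof.
split => x y; rewrite !inE /=.
  by move/eqP => ->; exact: adj_s22.
rewrite -!(inj_eq code_inj).
elim/caseV: x; elim/caseV: y; by rewrite /Qprod /Ppath /= ?inE ?eqxx.
Qed.

Lemma no_AT1 (V : finType) (adj : rel V) (D : {set V * V}) x y :
  is_orientation adj D -> adj x y -> (forall z, outdeg D z < 1) -> False.
Proof.
move=> [_ HO] Hxy Hout; move: (HO x y Hxy).
case: (boolP ((x, y) \in D)) => H1 HH.
  by move: (Hout x); rewrite /outdeg ltnS leqn0 cards_eq0 => /eqP /setP /(_ y); rewrite !inE H1.
case: (boolP ((y, x) \in D)) => H2; last by rewrite (negbTE H2) in HH.
by move: (Hout y); rewrite /outdeg ltnS leqn0 cards_eq0 => /eqP /setP /(_ x); rewrite !inE H2.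
Qed.

Theorem corollary3p9 (n m : nat) (hn : 2 <= n) (hm : 2 <= m) :
  AT_number (Qprod (Ppath n) (Ppath m))
            (if (n == 2) && (m == 2) then 2 else 3).
Proof.
case: ifP => H.
- case/andP: H => /eqP En /eqP Em; subst n m; split.
  + exists D22; split; first exact: orient22.
    split; first by apply: (@cycle_AT _ s22 (inl ord0, ord0) s22_inj s22_cyc); rewrite card_prod card_ord muln2 odd_double.
    move=> x; rewrite /outdeg.
    have -> : [set y | (x, y) \in D22] = [set s22 x] by apply/setP => y; rewrite !inE.
    by rewrite cards1.
  + move=> j hj [D [HO [_ Hout]]].
    apply: (@no_AT1 _ _ D (inl ord0, ord0) (inl ord0, ord_max) HO) => // z.
    by apply: leq_trans (Hout z) _.
- split.
  + exists [set a | Qprod (Ppath n) (Ppath m) a.1 a.2 && (rank a.1 < rank a.2)].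
    split.
      apply: rank_orient => x y; first by rewrite Qprod_sym.
      move=> Hxy; apply/eqP => /rank_inj e; by rewrite e Qprod_irr in Hxy.
    split; last exact: outdeg_rank.
    by apply: (@acyc_AT _ (@rank n m)) => a; rewrite inE => /andP[].
  + move=> j hj [D [HO [_ Hout]]].
    apply: (@no_AT2 _ _ D HO).
    * by move=> z; apply: leq_trans (Hout z) _.
    * by move=> x; apply: deg2.
    * by apply: deg3 => //; rewrite H.
Qed.
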